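(* Let $\mathcal{M}=(E,\mathcal{C})$ be a loopless oriented matroid with ground set $E=\{e_1,\dots,e_m\}$ totally ordered by $e_1\prec e_2\prec\cdots\prec e_m$, and let $\mathscr{N}_k$ ($0\le k\le m$) and $\psi_k:\mathscr{N}_{k-1}\to\mathscr{N}_k$ ($1\le k\le m$) be as defined in the context. Then each $\psi_k$ is a bijection from $\mathscr{N}_{k-1}$ onto $\mathscr{N}_k$, and consequently the map sending $A\in A(\mathcal{M})$ to the unique set $N\subseteq E$ with $\psi_m\circ\psi_{m-1}\circ\cdots\circ\psi_1(\emptyset,A)=(N,\emptyset)$ is a bijection from $A(\mathcal{M})$ onto $\mathrm{NBC}(\underline{\mathcal{M}})$.
   Context: A signed subset of a finite set $E$ is a pair $X=(X^+,X^-)$ of disjoint subsets of $E$; its support is $\underline{X}=X^+\cup X^-$ and $-X=(X^-,X^+)$. An oriented matroid $\mathcal{M}=(E,\mathcal{C})$ is a finite set $E$ with a collection $\mathcal{C}$ of signed subsets (signed circuits) such that: (C1) the empty signed set is not in $\mathcal{C}$; (C2) $\mathcal{C}=-\mathcal{C}$; (C3) if $X,Y\in\mathcal{C}$ and $\underline{X}\subseteq\underline{Y}$ then $X=\pm Y$; (C4) if $X,Y\in\mathcal{C}$, $X\neq -Y$, $X\ne Y$ and $e\in X^+\cap Y^-$, then there is $Z\in\mathcal{C}$ with $Z^+\subseteq X^+\cup Y^+-\{e\}$ and $Z^-\subseteq X^-\cup Y^--\{e\}$. The underlying matroid $\underline{\mathcal{M}}$ has circuits $\{\underline{X}:X\in\mathcal{C}\}$.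 A loop is a single element forming a circuit; $\mathcal{M}$ is loopless if it has none. A signed circuit $X$ is positive if $X^-=\emptyset$; $\mathcal{M}$ is acyclic if it has no positive circuits. For $A\subseteq E$, the reorientation ${}_{-A}\mathcal{M}$ has signed circuits ${}_{-A}X$ with ${}_{-A}X^+=(X^+-A)\cup(X^-\cap A)$, ${}_{-A}X^-=(X^--A)\cup(X^+\cap A)$; for a single element we write ${}_{-e}$. $A(\mathcal{M})=\{A\subseteq E: {}_{-A}\mathcal{M}\text{ is acyclic}\}$. For $X\subseteq E$: deletion $\mathcal{M}\backslash X$ on $E-X$ has signed circuits $\{Y\in\mathcal{C}:\underline{Y}\subseteq E-X\}$; contraction $\mathcal{M}/X$ on $E-X$ has signed circuits the inclusion-minimal nonempty members (by support) of $\{(Y^+-X,Y^--X):Y\in\mathcal{C},\ \underline{Y}-X\neq\emptyset\}$. A broken circuit of $\underline{\mathcal{M}}$ is a circuit with its $\prec$-maximal element removed; $N\subseteq E$ is an NBC subset if it contains no broken circuit; $\mathrm{NBC}(\underline{\mathcal{M}})$ is the set of NBC subsets. Let $E_k=\{e_1,\dots,e_k\}$. For $N_k\subseteq E_k$ put $N_k^c=E_k-N_k$. $\mathscr{N}_k$ is the set of pairs $(N_k,A_k)$ with $N_k\subseteq E_k$, $A_k\subseteq E-E_k$, $N_k\in\mathrm{NBC}(\underline{\mathcal{M}})$, and $\mathcal{M}_k:={}_{-A_k}(\mathcal{M}\backslash N_k^c/N_k)$ (an oriented matroid on $E-E_k$) acyclic. For $(N_{k-1},A_{k-1})\in\mathscr{N}_{k-1}$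 with $\mathcal{M}_{k-1}={}_{-A_{k-1}}(\mathcal{M}\backslash N_{k-1}^c/N_{k-1})$, define $\psi_k(N_{k-1},A_{k-1})$ to be $(N_{k-1}\cup\{e_k\},A_{k-1})$ if $e_k\notin A_{k-1}$ and ${}_{-e_k}\mathcal{M}_{k-1}$ is acyclic; $(N_{k-1},A_{k-1})$ if $e_k\notin A_{k-1}$ and ${}_{-e_k}\mathcal{M}_{k-1}$ is not acyclic; $(N_{k-1},A_{k-1}-\{e_k\})$ if $e_k\in A_{k-1}$. *)

(* Defs.v *)
(* Ground set E = {e_1,...,e_m} is encoded as 'I_m, with
   e_k the ordinal of value k-1, and the total order e_1 < ... < e_m the
   natural order of ordinals. Oriented matroids on a subset S of 'I_m
   (needed for minors, whose ground set is E - X) are encoded by their set of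
   signed circuits, all supported inside S. *)
From mathcomp Require Import all_boot.
Set Implicit Arguments. Unset Strict Implicit. Unset Printing Implicit Defensive.

Section OM.
Variable m : nat.
Notation T := 'I_m.

(* A signed subset X = (X^+, X^-). *)
Definition signed := ({set T} * {set T})%type.

Definition supp (X : signed) : {set T} := X.1 :|: X.2.
Definition negs (X : signed) : signed := (X.2, X.1).

Definition is_OM (S : {set T}) (C : {set signed}) : Prop :=
  [/\ (forall X, X \in C -> [disjoint X.1 & X.2] /\ supp X \subset S),
      (set0, set0) \notin C,
      (forall X, X \in C -> negs X \in C),
      (forall X Y, X \in C -> Y \in C -> supp X \subset supp Y ->
          X = Y \/ X = negs Y) &
      (forall X Y e, X \in C -> Y \in C -> X != negs Y -> X != Y ->
          e \in X.1 -> e \in Y.2 ->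
          exists2 Z, Z \in C &
            Z.1 \subset (X.1 :|: Y.1) :\ e /\ Z.2 \subset (X.2 :|: Y.2) :\ e)].

Definition loopless (C : {set signed}) : Prop :=
  forall X, X \in C -> #|supp X| != 1.

Definition reorient (A : {set T}) (X : signed) : signed :=
  ((X.1 :\: A) :|: (X.2 :&: A), (X.2 :\: A) :|: (X.1 :&: A)).
Definition reor (A : {set T}) (C : {set signed}) : {set signed} :=
  [set reorient A X | X in C].

Definition acyclic (C : {set signed}) : bool :=
  [forall X in C, X.2 != set0].

Definition del (X : {set T}) (C : {set signed}) : {set signed} :=
  [set Y in C | supp Y \subset ~: X].

Definition con_cands (X : {set T}) (C : {set signed}) : {set signed} :=
  [set ((Y.1 :\: X, Y.2 :\: X) : signed) | Y in C & supp Y :\: X != set0].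
Definition con (X : {set T}) (C : {set signed}) : {set signed} :=
  [set Z in con_cands X C |
     [forall W in con_cands X C, ~~ (supp W \proper supp Z)]].

Definition contains_broken_circuit (C : {set signed}) (N : {set T}) : bool :=
  [exists X in C, exists e in supp X,
     [forall f in supp X, f <= e] && (supp X :\ e \subset N)].
Definition NBC (C : {set signed}) (N : {set T}) : bool :=
  ~~ contains_broken_circuit C N.

Definition Ek (k : nat) : {set T} := [set i : T | i < k].

Definition Mk (C : {set signed}) (k : nat) (N A : {set T}) : {set signed} :=
  reor A (con N (del (Ek k :\: N) C)).

Definition NN (C : {set signed}) (k : nat) : {set signed} :=
  [set p : signed | [&& p.1 \subset Ek k, p.2 \subset ~: Ek k,
                        NBC C p.1 & acyclic (Mk C k p.1 p.2)]].

(* psi_k for k = e.+1, where e : 'I_m is e_k (value k-1). *)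
Definition psi (C : {set signed}) (e : T) (p : signed) : signed :=
  if e \notin p.2 then
    if acyclic (reor [set e] (Mk C e p.1 p.2)) then (e |: p.1, p.2)
    else p
  else (p.1, p.2 :\ e).

Definition psi_all (C : {set signed}) (A : {set T}) : signed :=
  foldl (fun p e => psi C e p) ((set0, A) : signed) (enum 'I_m).

Definition AM (C : {set signed}) : {set {set T}} :=
  [set A : {set T} | acyclic (reor A C)].
Definition NBCset (C : {set signed}) : {set {set T}} :=
  [set N : {set T} | NBC C N].

End OM.

(* Main.v *)
Require Import Defs.
From mathcomp Require Import all_boot.
Set Implicit Arguments. Unset Strict Implicit. Unset Printing Implicit Defensive.

Ltac bcase := repeat match goal with |- context [?a \in ?S] => case: (a \in S) end; try done.

Definition welim {m} (C : {set signed m}) := forall X Y e, X \in C -> Y \in C ->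
  X != negs Y -> X != Y -> e \in X.1 -> e \in Y.2 ->
  exists2 Z, Z \in C & Z.1 \subset (X.1 :|: Y.1) :\ e /\ Z.2 \subset (X.2 :|: Y.2) :\ e.

Definition disj {m} (C : {set signed m}) := forall X, X \in C -> [disjoint X.1 & X.2].

Definition cut {m} (N : {set 'I_m}) (Y : signed m) : signed m := (Y.1 :\: N, Y.2 :\: N).

Definition pos {m} (C : {set signed m}) (D N : {set 'I_m}) : bool :=
  [exists Y in C, [&& supp Y \subset ~: D, Y.2 \subset N & ~~ (supp Y \subset N)]].

Implicit Types (m : nat).

Lemma reorientK {m} (A : {set 'I_m}) : involutive (@reorient m A).
Proof.
case=> X1 X2; rewrite /reorient /=; congr pair; apply/setP=> x; rewrite !inE; bcase.
Qed.

Lemma mem_reor {m} (A : {set 'I_m}) (S : {set signed m}) (Y : signed m) : (Y \in reor A S) = (reorient A Y \in S).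
Proof. by rewrite /reor (can_imset_pre _ (reorientK A)) inE. Qed.

Lemma supp_reorient {m} (A : {set 'I_m}) (X : signed m) : supp (reorient A X) = supp X.
Proof. case: X => X1 X2; apply/setP=> x; rewrite /supp /= !inE; bcase. Qed.

Lemma reorient_negs {m} (A : {set 'I_m}) (X : signed m) : reorient A (negs X) = negs (reorient A X).
Proof. by case: X. Qed.

Lemma supp_negs {m} (X : signed m) : supp (negs X) = supp X.
Proof. by rewrite /supp setUC. Qed.

Lemma reorient_inj {m} (A : {set 'I_m}) : injective (@reorient m A).
Proof. exact: (inv_inj (reorientK A)). Qed.

Lemma welim_reor {m} (A : {set 'I_m}) (C : {set signed m}) : welim C -> welim (reor A C).
Proof.
move=> hW X Y e; rewrite !mem_reor => XC YC nXY nXY' eX eY.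
have nXY1 : reorient A X != negs (reorient A Y).
  by apply: contra nXY; rewrite -reorient_negs => /eqP/reorient_inj ->.
have nXY2 : reorient A X != reorient A Y.
  by apply: contra nXY' => /eqP/reorient_inj ->.
case eA: (e \in A).
- have e1 : e \in (reorient A X).2 by move: eX; rewrite /reorient /= !inE eA; bcase.
  have e2 : e \in (reorient A Y).1 by move: eY; rewrite /reorient /= !inE eA; bcase.
  have nYX1 : reorient A Y != negs (reorient A X).
    by apply: contra nXY1 => /eqP ->; case: (reorient A X).
  have nYX2 : reorient A Y != reorient A X by rewrite eq_sym.
  case: (hW _ _ e YC XC nYX1 nYX2 e2 e1) => Z ZC [/subsetP Z1 /subsetP Z2].
  exists (reorient A Z); first by rewrite mem_reor reorientK.
  move: Z1 Z2; clear -X Y Z A e.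
  case: X => X1 X2; case: Y => Y1 Y2; case: Z => Z1 Z2 /= HZ1 HZ2.
  split; apply/subsetP=> x; move: (HZ1 x) (HZ2 x); rewrite /reorient /= !inE;
    case: (x == e); bcase.
- have e1 : e \in (reorient A X).1 by move: eX; rewrite /reorient /= !inE eA; bcase.
  have e2 : e \in (reorient A Y).2 by move: eY; rewrite /reorient /= !inE eA; bcase.
  case: (hW _ _ e XC YC nXY1 nXY2 e1 e2) => Z ZC [/subsetP Z1 /subsetP Z2].
  exists (reorient A Z); first by rewrite mem_reor reorientK.
  move: Z1 Z2; clear -X Y Z A e.
  case: X => X1 X2; case: Y => Y1 Y2; case: Z => Z1 Z2 /= HZ1 HZ2.
  split; apply/subsetP=> x; move: (HZ1 x) (HZ2 x); rewrite /reorient /= !inE;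
    case: (x == e); bcase.
Qed.

Lemma disj_reor {m} (A : {set 'I_m}) (C : {set signed m}) : disj C -> disj (reor A C).
Proof.
move=> hD X; rewrite mem_reor => /hD; rewrite !disjoint_subset => /subsetP H.
apply/subsetP => x; move: (H x); clear; case: X => X1 X2; rewrite /reorient /= !inE; bcase.
Qed.

Lemma reorient_cut {m} (A : {set 'I_m}) (N : {set 'I_m}) (Y : signed m) : reorient A (cut N Y) = cut N (reorient A Y).
Proof.
case: Y => Y1 Y2; rewrite /reorient /cut /=; congr pair; apply/setP=> x; rewrite !inE; bcase.
Qed.

Lemma supp_cut {m} (N : {set 'I_m}) (Y : signed m) : supp (cut N Y) = supp Y :\: N.
Proof. by rewrite /supp /cut setDUl. Qed.

Lemma cands_reor {m} (A : {set 'I_m}) (N : {set 'I_m}) (S : {set signed m}) : con_cands N (reor A S) = reor A (con_cands N S).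
Proof.
apply/setP => Z; rewrite mem_reor; apply/imsetP/imsetP.
- case=> Y; rewrite inE mem_reor => /andP[YS Yn] ->.
  exists (reorient A Y); first by rewrite inE YS supp_reorient.
  exact: (reorient_cut A N Y).
- case=> Y; rewrite inE => /andP[YS Yn] E.
  exists (reorient A Y); first by rewrite inE mem_reor reorientK YS supp_reorient.
  rewrite -[Z](reorientK A) E; exact: (reorient_cut A N Y).
Qed.

Lemma con_reor {m} (A : {set 'I_m}) (N : {set 'I_m}) (S : {set signed m}) : reor A (con N S) = con N (reor A S).
Proof.
apply/setP=> Z; rewrite mem_reor !inE cands_reor mem_reor; congr andb.
apply/forall_inP/forall_inP => H W.
- rewrite mem_reor => /H; by rewrite !supp_reorient.
- move=> HW; have := H (reorient A W); rewrite mem_reor reorientK => /(_ HW).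
  by rewrite !supp_reorient.
Qed.

Lemma del_reor {m} (A : {set 'I_m}) (D : {set 'I_m}) (S : {set signed m}) : reor A (del D S) = del D (reor A S).
Proof. by apply/setP=> Y; rewrite mem_reor !inE mem_reor supp_reorient. Qed.

Lemma Mk_eq {m} (C : {set signed m}) (k : nat) (N : {set 'I_m}) (A : {set 'I_m}) : Mk C k N A = con N (del (Ek m k :\: N) (reor A C)).
Proof. by rewrite /Mk con_reor del_reor. Qed.



Lemma inner {m} (C : {set signed m}) (D N : {set 'I_m}) (Y : signed m) :
  welim C -> (forall X, X \in C -> ~~ (supp X \subset N)) ->
  Y \in C -> Y.2 \subset N -> supp Y \subset ~: D ->
  forall n (Y' : signed m), #|Y'.2 :\: N| <= n -> Y' \in C -> supp Y' \subset ~: D ->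
  supp Y' :\: N \proper supp Y :\: N ->
  exists2 V, V \in C & [&& supp V \subset ~: D, V.2 \subset N, ~~ (supp V \subset N)
                         & supp V :\: N \proper supp Y :\: N].
Proof.
move=> hW hI YC Y2N YD n; elim: n => [|n IH] Y' hn Y'C Y'D Hp;
  (case: (set_0Vmem (Y'.2 :\: N)) => [H0|[f Hf]]);
  try by (exists Y'; rewrite // Y'D -setD_eq0 H0 eqxx hI).
  by move: hn; rewrite leqn0 cards_eq0 => /eqP H; rewrite H inE in Hf.
have [fN fY'2] : f \notin N /\ f \in Y'.2 by move: Hf; rewrite inE => /andP.
have fY : f \in supp Y :\: N.
  by apply: (subsetP (proper_sub Hp)); rewrite inE fN /supp inE fY'2 orbT.
have fY1 : f \in Y.1.
  move: fY; rewrite !inE fN /= => /orP[//|] /(subsetP Y2N); by rewrite (negbTE fN).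
have nYY1 : Y != negs Y'.
  by apply/eqP => E; move: Hp; rewrite E supp_negs properxx.
have nYY2 : Y != Y'.
  by apply/eqP => E; move: Hp; rewrite E properxx.
case: (hW _ _ f YC Y'C nYY1 nYY2 fY1 fY'2) => Z ZC [/subsetP Z1 /subsetP Z2].
move/subsetP: Y2N => Y2N; move/subsetP: YD => YD; move/subsetP: Y'D => Y'D.
have sZ : forall x, x \in supp Z -> x != f /\ (x \in supp Y \/ x \in supp Y').
  move=> x; rewrite /supp inE => /orP[/Z1|/Z2]; rewrite !inE => /andP[xf H]; split=> //;
    by case/orP: H => H; [left|right]; rewrite /supp ?inE H ?orbT.
apply: (IH Z) => //.
- rewrite -ltnS; apply: leq_trans hn; apply: proper_card; apply/properP; split.
    apply/subsetP => x; rewrite !inE => /andP[xN /Z2]; rewrite !inE => /andP[_ /orP[/Y2N|]].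
      by rewrite (negbTE xN).
    by move=> ->; rewrite xN.
  exists f => //; rewrite inE fN /=; apply/negP => /Z2; by rewrite !inE eqxx.
- apply/subsetP => x /sZ [_ [/YD|/Y'D]] //.
- apply/properP; split.
    apply/subsetP => x; rewrite inE => /andP[xN /sZ[_ [xY|xY']]]; first by rewrite inE xN.
    by apply: (subsetP (proper_sub Hp)); rewrite inE xN.
  exists f => //; rewrite inE negb_and negbK; apply/orP; right; apply/negP => /sZ[]; by rewrite eqxx.
Qed.

Lemma outer {m} (C : {set signed m}) (D N : {set 'I_m}) :
  welim C -> (forall X, X \in C -> ~~ (supp X \subset N)) ->
  forall n (Y : signed m), #|supp Y :\: N| <= n -> Y \in C -> supp Y \subset ~: D ->
  Y.2 \subset N -> ~~ acyclic (con N (del D C)).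
Proof.
move=> hW hI n; elim: n => [|n IH] Y hn YC YD Y2N.
  by move: hn; rewrite leqn0 cards_eq0 setD_eq0 (negbTE (hI _ YC)).
have Yc : cut N Y \in con_cands N (del D C).
  by apply: imset_f; rewrite !inE YC YD setD_eq0 hI.
case Hmin: [forall W in con_cands N (del D C), ~~ (supp W \proper supp (cut N Y))].
  have Hin : cut N Y \in con N (del D C) by rewrite inE Yc Hmin.
  apply/negP => /forall_inP /(_ _ Hin); rewrite /cut /=.
  by move: Y2N; rewrite -setD_eq0 => /eqP ->; rewrite eqxx.
move/negbT: Hmin => /forall_inPn [W Wc]; rewrite negbK supp_cut => Wp.
case/imsetP: Wc => Y'; rewrite !inE => /andP[/andP[Y'C Y'D] _] EW.
have Hp : supp Y' :\: N \proper supp Y :\: N.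
  by move: Wp; rewrite EW -[(_, _)]/(cut N Y') supp_cut.
case: (inner hW hI YC Y2N YD (leqnn _) Y'C Y'D Hp) => V VC /and4P[VD V2N _ Vp].
apply: (IH V) => //; rewrite -ltnS; apply: leq_trans hn; exact: proper_card.
Qed.

Lemma KL {m} (C : {set signed m}) (D N : {set 'I_m}) :
  welim C -> (forall X, X \in C -> ~~ (supp X \subset N)) ->
  acyclic (con N (del D C)) = ~~ pos C D N.
Proof.
move=> hW hI; apply/idP/idP.
- move=> Hac; apply/negP => /exists_inP [Y YC /and3P[YD Y2N _]].
  by move: Hac; apply/negP; apply: (outer hW hI (leqnn _) YC YD Y2N).
- move=> np; apply/forall_inP => Z; rewrite inE => /andP[Zc _].
  case/imsetP: Zc => Y; rewrite !inE => /andP[/andP[YC YD] Yne] -> /=.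
  apply/negP => /eqP H; move/negP: np; apply; apply/exists_inP; exists Y => //.
  by rewrite YD -setD_eq0 H eqxx /= -setD_eq0.
Qed.


Lemma reorient_eq_on {m} (A A' : {set 'I_m}) (Y : signed m) :
  (forall x, x \in supp Y -> (x \in A) = (x \in A')) -> reorient A Y = reorient A' Y.
Proof.
move=> H; case: Y H => Y1 Y2 H; rewrite /reorient /=; congr pair; apply/setP => x;
  have := H x; rewrite /supp /= !inE; bcase; by move=> ->.
Qed.

Lemma reorient_comp {m} (A : {set 'I_m}) e (Y : signed m) : e \notin A ->
  reorient A (reorient [set e] Y) = reorient (e |: A) Y.
Proof.
move=> eA; case: Y => Y1 Y2; rewrite /reorient /=; congr pair; apply/setP => x;
  rewrite !inE; case: (eqVneq x e) => [->|]; rewrite ?(negbTE eA); bcase.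
Qed.

Lemma reor_comp {m} (A : {set 'I_m}) e (C : {set signed m}) : e \notin A ->
  reor (e |: A) C = reor [set e] (reor A C).
Proof. by move=> eA; apply/setP => Y; rewrite !mem_reor reorient_comp. Qed.

Lemma indep {m} (C : {set signed m}) (N : {set 'I_m}) (X : signed m) :
  (set0, set0) \notin C -> NBC C N -> X \in C -> ~~ (supp X \subset N).
Proof.
move=> h0 hN XC; apply/negP => XN.
have [g0 g0X] : exists g0, g0 \in supp X.
  case: (set_0Vmem (supp X)) => [E|[x xX]]; last by exists x.
  move: E; rewrite /supp => /eqP; rewrite setU_eq0.
  case/andP => /eqP E1 /eqP E2; move: XC; case: X E1 E2 XN => X1 X2 /= -> ->.
  by rewrite (negbTE h0).
case: (arg_maxnP (fun i : 'I_m => nat_of_ord i) g0X) => g gX gmax.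
move/negP: hN; apply; apply/existsP; exists X; rewrite XC /=; apply/existsP; exists g.
apply/and3P; split => //; first by apply/forall_inP => f /gmax.
by apply: subset_trans XN; apply: subD1set.
Qed.

Lemma indep_reor {m} (C : {set signed m}) (A N : {set 'I_m}) (X : signed m) :
  (set0, set0) \notin C -> NBC C N -> X \in reor A C -> ~~ (supp X \subset N).
Proof. by move=> h0 hN; rewrite mem_reor => /(indep h0 hN); rewrite supp_reorient. Qed.

Lemma NBC_sub {m} (C : {set signed m}) (N N' : {set 'I_m}) : N' \subset N -> NBC C N -> NBC C N'.
Proof.
move=> sN; apply: contra => /exists_inP [X XC /exists_inP [g gX /andP [H1 H2]]].
apply/exists_inP; exists X => //; apply/exists_inP; exists g => //.
by rewrite H1; apply: subset_trans sN.
Qed.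

Lemma NBC_bc {m} (C : {set signed m}) (N : {set 'I_m}) (X : signed m) g :
  NBC C N -> X \in C -> g \in supp X -> (forall f, f \in supp X -> f <= g) ->
  supp X :\ g \subset N -> False.
Proof.
move=> /negP hN XC gX gm sub; apply: hN; apply/exists_inP; exists X => //.
apply/exists_inP; exists g => //; rewrite sub andbT; by apply/forall_inP.
Qed.

Lemma in_Ek {m} k (x : 'I_m) : (x \in Ek m k) = (x < k).
Proof. by rewrite inE. Qed.

Lemma EkS {m} (e : 'I_m) : Ek m e.+1 = e |: Ek m e.
Proof. by apply/setP => x; rewrite !inE ltnS leq_eqVlt. Qed.

Lemma Glem {m} (C : {set signed m}) (N : {set 'I_m}) (e : 'I_m) (X : signed m) :
  (set0, set0) \notin C -> NBC C N -> N \subset Ek m e -> X \in C ->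
  supp X \subset e |: N -> False.
Proof.
move=> h0 hN NE XC sX.
case eX: (e \in supp X); last first.
  move/negP: (indep h0 hN XC); apply; apply/subsetP => x xX.
  move: (subsetP sX x xX); rewrite !inE => /orP[/eqP E|//].
  by move: xX; rewrite E eX.
apply: (NBC_bc hN XC eX).
  move=> f /(subsetP sX); rewrite !inE => /orP[/eqP ->//|/(subsetP NE)].
  by rewrite inE => /ltnW.
apply/subsetP => x; rewrite in_setD1 => /andP[xe xX].
by move: (subsetP sX x xX); rewrite !inE (negbTE xe).
Qed.

Lemma Mono {m} (C : {set signed m}) (A A' D D' N : {set 'I_m}) :
  D \subset D' -> (forall x, x \notin D' -> (x \in A) = (x \in A')) ->
  pos (reor A C) D' N -> pos (reor A' C) D N.
Proof.
move=> sD hA /exists_inP [Y YC /and3P[YD Y2 YN]]; apply/exists_inP; exists Y.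
  move: YC; rewrite !mem_reor (reorient_eq_on (A' := A')) // => x xY.
  by apply: hA; move: (subsetP YD x xY); rewrite inE.
apply/and3P; split => //; apply: subset_trans YD _; by rewrite setCS.
Qed.


Lemma flip {m} (C : {set signed m}) (A D N : {set 'I_m}) e (Y : signed m) :
  disj C -> e \notin A -> Y \in reor A C -> supp Y \subset ~: D ->
  Y.2 \subset e |: N -> ~~ (supp Y \subset N) ->
  pos (reor A C) D N || pos (reor (e |: A) C) D N.
Proof.
move=> hD eA YC YD /subsetP Y2 YN.
have dY := disj_reor hD YC.
case e2: (e \in Y.2).
- apply/orP; right; apply/exists_inP; exists (reorient [set e] Y).
    by rewrite reor_comp // mem_reor reorientK.
  rewrite supp_reorient YD YN andbT /=; apply/subsetP => x.
  rewrite /reorient /= !inE; case: (eqVneq x e) => [->|xe] /=.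
    by rewrite andbT (disjointFl dY e2).
  rewrite andbF orbF => xY; by move: (Y2 x xY); rewrite !inE (negbTE xe).
- apply/orP; left; apply/exists_inP; exists Y => //.
  rewrite YD YN andbT /=; apply/subsetP => x xY.
  move: (Y2 x xY); rewrite !inE => /orP[/eqP E|//]; by move: xY; rewrite E e2.
Qed.

Lemma step_add {m} (C : {set signed m}) (N A : {set 'I_m}) (e : 'I_m) :
  (set0, set0) \notin C -> disj C -> (forall X, X \in C -> negs X \in C) ->
  NBC C N -> N \subset Ek m e -> e \notin A ->
  ~~ pos (reor A C) (Ek m e :\: N) N -> ~~ pos (reor (e |: A) C) (Ek m e :\: N) N ->
  NBC C (e |: N) /\ ~~ pos (reor A C) (Ek m e.+1 :\: (e |: N)) (e |: N).
Proof.
move=> h0 hD hN NBN NE eA np1 np2.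
have eN : e \notin N by apply/negP => /(subsetP NE); rewrite inE ltnn.
have flipc : forall Y, Y \in reor A C -> supp Y \subset ~: (Ek m e :\: N) ->
    Y.2 \subset e |: N -> ~~ (supp Y \subset N) -> False.
  move=> Y YC YD Y2 YN; have := flip hD eA YC YD Y2 YN.
  by rewrite (negbTE np1) (negbTE np2).
split.
- apply/negP => /exists_inP [X XC /exists_inP [g gX /andP[/forall_inP gm sub]]].
  have eX : e \in supp X :\ g.
    apply/negP => eX; apply: (NBC_bc NBN XC gX gm); apply/subsetP => x xX.
    move: (subsetP sub x xX); rewrite !inE => /orP[/eqP E|//]; by move: eX; rewrite -E xX.
  move: (eX); rewrite in_setD1 => /andP[eg eSX].
  have lt_eg : e < g.
    rewrite ltn_neqAle (gm e eSX) andbT; exact: eg.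
  set R := reorient A X.
  have RC : R \in reor A C by rewrite mem_reor reorientK.
  have dR := disj_reor hD RC.
  pose Y := if g \in R.2 then negs R else R.
  have YC : Y \in reor A C.
    rewrite /Y; case: ifP => // _; by rewrite mem_reor reorient_negs reorientK hN.
  have sY : supp Y = supp X by rewrite /Y; case: ifP => _; rewrite ?supp_negs supp_reorient.
  have gY : g \notin Y.2.
    rewrite /Y; case: ifP => [g2|]; last by move=> ->.
    by rewrite /= (disjointFl dR g2).
  apply: (flipc Y YC).
  + rewrite sY; apply/subsetP => x xX; rewrite !inE negb_and negbK.
    case: (eqVneq x g) => [->|xg]; first by rewrite -leqNgt (ltnW lt_eg) ?orbT.
    have : x \in supp X :\ g by rewrite in_setD1 xg.
    move/(subsetP sub); rewrite !inE => /orP[/eqP ->|->//]; by rewrite ltnn ?orbT.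
  + apply/subsetP => x xY; apply: (subsetP sub); rewrite in_setD1 -sY.
    rewrite /supp inE xY orbT andbT; by apply: contra gY => /eqP <-.
  + rewrite sY; apply/negP => /subsetP /(_ e eSX); exact/negP.
- apply/negP => /exists_inP [Y YC /and3P[YD Y2 YN]].
  have ED : Ek m e.+1 :\: (e |: N) = Ek m e :\: N.
    apply/setP => x; rewrite !inE ltnS leq_eqVlt; case: (eqVneq x e) => [->|xe] /=.
      by rewrite ltnn andbF.
    have xe' : (nat_of_ord x == nat_of_ord e) = false by exact: (negbTE xe).
    by rewrite xe'.
  rewrite ED in YD; apply: (flipc Y YC YD Y2).
  by apply: contra YN => H; apply: subset_trans H _; apply: subsetUr.
Qed.


Lemma inNN {m} (C : {set signed m}) k (p : signed m) :
  welim C -> (set0, set0) \notin C ->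
  (p \in NN C k) = [&& p.1 \subset Ek m k, p.2 \subset ~: Ek m k, NBC C p.1 &
                      ~~ pos (reor p.2 C) (Ek m k :\: p.1) p.1].
Proof.
move=> hW h0; rewrite inE; case hN: (NBC C p.1); last by rewrite !andbF.
rewrite Mk_eq KL //; first exact: welim_reor.
by move=> X; apply: indep_reor.
Qed.

Lemma EL {m} (C : {set signed m}) (N A : {set 'I_m}) (e : 'I_m) :
  welim C -> disj C -> (set0, set0) \notin C ->
  NBC C N -> N \subset Ek m e -> e \notin A ->
  ~~ pos (reor A C) (e |: (Ek m e :\: N)) N ->
  pos (reor (e |: A) C) (Ek m e :\: N) N -> pos (reor A C) (Ek m e :\: N) N -> False.
Proof.
move=> hW hD h0 NBN NE eA np /exists_inP [Y0 Y0C /and3P[Y0D Y02 Y0N]]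
  /exists_inP [X XC /and3P[XD X2 XN]].
set D := Ek m e :\: N in Y0D XD np.
have eN : e \notin N by apply/negP => /(subsetP NE); rewrite inE ltnn.
have Dfree : forall W, W \in reor A C -> supp W \subset ~: D -> W.2 \subset N ->
    e \notin supp W -> False.
  move=> W WC WD W2 eW; move/negP: np; apply; apply/exists_inP; exists W => //.
  apply/and3P; split => //; last exact: (indep_reor h0 NBN WC).
  apply/subsetP => x xW.
  rewrite in_setC in_setU1 negb_or; apply/andP; split; last by move: (subsetP WD x xW); rewrite in_setC.
  by apply: contra eW => /eqP <-.
have eX1 : e \in X.1.
  case eX: (e \in supp X); last by case: (Dfree X XC XD X2); rewrite eX.
  move: eX; rewrite /supp inE => /orP[//|/(subsetP X2)]; by rewrite (negbTE eN).
have eY0 : e \in Y0.1.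
  case eY: (e \in supp Y0).
    move: eY; rewrite /supp inE => /orP[//|/(subsetP Y02)]; by rewrite (negbTE eN).
  exfalso; apply: (Dfree Y0) => //; last by rewrite eY.
  move: Y0C; rewrite !mem_reor (reorient_eq_on (A' := A)) // => x xY.
  rewrite in_setU1; case: (eqVneq x e) => [E|xe] /=; last by [].
  by move: eY; rewrite -E xY.
set Y := reorient [set e] Y0.
have YC : Y \in reor A C by move: Y0C; rewrite reor_comp // [Y0 \in _]mem_reor.
have eY2 : e \in Y.2 by rewrite /Y /reorient /= !inE eqxx eY0.
have Y2 : Y.2 \subset e |: N.
  apply/subsetP => x; rewrite /Y /reorient /= !inE.
  case: (eqVneq x e) => [//|xe] /=; rewrite andbF orbF => /(subsetP Y02) xN; by rewrite xN ?orbT.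
have sY : supp Y = supp Y0 by rewrite supp_reorient.
have dX := disj_reor hD XC.
have nXY2 : X != Y by apply/eqP => E; move: (disjointFr dX eX1); rewrite E eY2.
have nXY1 : X != negs Y.
  apply/eqP => E; move: XC; rewrite mem_reor => XC'; apply: (Glem h0 NBN NE XC').
  rewrite supp_reorient /supp; apply/subsetP => x; rewrite inE => /orP[].
    by rewrite E /= => /(subsetP Y2).
  by move/(subsetP X2); rewrite inE orbC => ->.
case: (welim_reor hW XC YC nXY1 nXY2 eX1 eY2) => Z ZC [/subsetP Z1 /subsetP Z2].
move/negP: np; apply; apply/exists_inP; exists Z => //.
apply/and3P; split; last exact: (indep_reor h0 NBN ZC).
- apply/subsetP => x; rewrite /supp inE => xZ.
  have [xe xXY] : x != e /\ (x \in supp X \/ x \in supp Y0).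
    rewrite -sY /supp; case/orP: xZ => [/Z1|/Z2]; rewrite !inE => /andP[xe H]; split=> //;
      by case/orP: H => H; [left|right]; rewrite ?inE H ?orbT.
  rewrite in_setC in_setU1 negb_or xe /=; case: xXY => [/(subsetP XD)|/(subsetP Y0D)]; by rewrite in_setC.
- apply/subsetP => x /Z2; rewrite in_setD1 in_setU => /andP[xe /orP[H|H]]; first exact: (subsetP X2).
  by move: (subsetP Y2 x H); rewrite !inE (negbTE xe).
Qed.


Lemma acyc_flip {m} (C : {set signed m}) (N A : {set 'I_m}) (e : 'I_m) :
  welim C -> (set0, set0) \notin C -> e \notin A -> NBC C N ->
  acyclic (reor [set e] (Mk C e N A)) = ~~ pos (reor (e |: A) C) (Ek m e :\: N) N.
Proof.
move=> hW h0 eA NBN; rewrite /Mk -reor_comp // -/(Mk C e N (e |: A)) Mk_eq KL //.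
  exact: welim_reor.
by move=> X; apply: indep_reor.
Qed.

Lemma e_notin_Ek {m} (e : 'I_m) : e \notin Ek m e.
Proof. by rewrite inE ltnn. Qed.

Lemma e_in_EkS {m} (e : 'I_m) : e \in Ek m e.+1.
Proof. by rewrite inE ltnS. Qed.

Lemma EkS_D {m} (e : 'I_m) (N : {set 'I_m}) : e \notin N ->
  Ek m e.+1 :\: N = e |: (Ek m e :\: N).
Proof.
move=> eN; apply/setP => x; rewrite in_setD EkS !in_setU1 in_setD.
by case: (eqVneq x e) => [->|] /=; rewrite ?eN.
Qed.

Lemma sub_EkS {m} (e : 'I_m) : Ek m e \subset Ek m e.+1.
Proof. by rewrite EkS subsetUr. Qed.

Lemma sub_Ek_noe {m} (e : 'I_m) (N : {set 'I_m}) :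
  N \subset Ek m e.+1 -> e \notin N -> N \subset Ek m e.
Proof.
move=> /subsetP NE eN; apply/subsetP => x xN; move: (NE x xN); rewrite EkS in_setU1.
by case/orP => // /eqP E; move: eN; rewrite -E xN.
Qed.

Lemma psi_step {m} (C : {set signed m}) (e : 'I_m) :
  welim C -> disj C -> (set0, set0) \notin C -> (forall X, X \in C -> negs X \in C) ->
  [/\ (forall p, p \in NN C e -> psi C e p \in NN C e.+1),
      {in NN C e &, injective (psi C e)} &
      (forall q, q \in NN C e.+1 -> exists2 p, p \in NN C e & psi C e p = q)].
Proof.
move=> hW hD h0 hN.
have eEk := e_notin_Ek e; have eEkS := e_in_EkS e.
split.
- case=> N A; rewrite [(_, _) \in _]inNN //= => /and4P[NE AE NBN np].
  have eN : e \notin N by apply: contra eEk => /(subsetP NE).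
  have NE' : N \subset Ek m e.+1 by apply: subset_trans NE (sub_EkS e).
  have DD : Ek m e :\: N \subset Ek m e.+1 :\: N by rewrite setSD ?sub_EkS.
  rewrite /psi /=; case: ifPn => eA; last first.
    rewrite inNN //= NE' NBN /=; apply/andP; split.
      apply/subsetP => x; rewrite in_setD1 => /andP[xe /(subsetP AE)].
      by rewrite !in_setC EkS in_setU1 (negbTE xe).
    apply: contra np => H; apply: Mono DD _ H => x; rewrite EkS_D // in_setU1 negb_or.
    by case/andP => xe _; rewrite in_setD1 xe.
  have AE' : A \subset ~: Ek m e.+1.
    apply/subsetP => x xA; move: (subsetP AE x xA); rewrite !in_setC EkS in_setU1 => xE.
    by rewrite negb_or xE andbT; apply: contra eA => /eqP <-.
  rewrite acyc_flip //; case: ifPn => np2.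
    have [NBN' np'] := step_add h0 hD hN NBN NE eA np np2.
    by rewrite inNN //= NBN' np' AE' andbT /= EkS setUS.
  rewrite inNN //= NE' AE' NBN /=; apply: contra np => H; apply: Mono DD _ H => //.
- case=> N A; case=> N' A'; rewrite [(N, A) \in _]inNN //= [(N', A') \in _]inNN //= => /and4P[NE AE NBN np] /and4P[NE' AE' NBN' np'].
  have eN : e \notin N by apply: contra eEk => /(subsetP NE).
  have eN' : e \notin N' by apply: contra eEk => /(subsetP NE').
  have key : forall N A A', NBC C N -> A' = A :\ e -> e \in A -> e \notin A' ->
      ~~ pos (reor A C) (Ek m e :\: N) N ->
      acyclic (reor [set e] (Mk C e N A')) = true.
    move=> N0 A0 A0' NB0 E eA0 eA0' np0; rewrite (acyc_flip hW h0 eA0' NB0) E setD1K //.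
  rewrite /psi /=.
  case eA: (e \in A); case eA': (e \in A') => /=.
  + move=> [E1 E2]; by rewrite -(setD1K eA) -(setD1K eA') E1 E2.
  + case ac': (acyclic (reor [set e] (Mk C e N' A'))); move=> [E1 E2].
    * by move: eN; rewrite E1 setU11.
    * by rewrite (key N' A A' NBN' (esym E2) eA (negbT eA') ltac:(by rewrite -E1)) in ac'.
  + case ac: (acyclic (reor [set e] (Mk C e N A))); move=> [E1 E2].
    * by move: eN'; rewrite -E1 setU11.
    * by rewrite (key N A' A NBN E2 eA' (negbT eA) ltac:(by rewrite E1)) in ac.
  + case ac: (acyclic (reor [set e] (Mk C e N A)));
      case ac': (acyclic (reor [set e] (Mk C e N' A'))); move=> [E1 E2].
    * by rewrite -(setU1K eN) -(setU1K eN') E1 E2.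
    * by move: eN'; rewrite -E1 setU11.
    * by move: eN; rewrite E1 setU11.
    * by rewrite E1 E2.
- case=> N' A'; rewrite [(_, _) \in _]inNN //= => /and4P[NE' AE' NBN' np'].
  have eA' : e \notin A' by apply/negP => /(subsetP AE'); rewrite in_setC eEkS.
  have AE : A' \subset ~: Ek m e.
    by apply: subset_trans AE' _; rewrite setCS sub_EkS.
  case: (boolP (e \in N')) => eN.
  + have NBN : NBC C (N' :\ e) by apply: NBC_sub NBN'; apply: subD1set.
    have NE : N' :\ e \subset Ek m e.
      apply: sub_Ek_noe; [apply: subset_trans NE'; apply: subD1set | by rewrite setD11].
    have DE : Ek m e :\: (N' :\ e) = Ek m e.+1 :\: N'.
      apply/setP => x; rewrite !inE.
      case: (eqVneq x e) => [->|xe] /=; first by rewrite ltnn ?andbF eN.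
      have xe' : (nat_of_ord x == nat_of_ord e) = false by exact: (negbTE xe).
      by rewrite [(x < e.+1)%N]ltnS [(x <= e)%N]leq_eqVlt xe'.
    exists (N' :\ e, A').
      rewrite inNN //= NE AE NBN /= DE; apply: contra np' => /exists_inP [Y YC /and3P[YD Y2 YN]].
      apply/exists_inP; exists Y => //; rewrite YD (indep_reor h0 NBN' YC) andbT /=.
      by apply: subset_trans Y2 _; apply: subD1set.
    rewrite /psi /= (negbTE eA') acyc_flip // ifT ?setD1K //.
    rewrite DE; apply: contra np' => /exists_inP [Y YC /and3P[YD Y2 YN]].
    apply/exists_inP; exists (reorient [set e] Y).
      by move: YC; rewrite reor_comp // mem_reor.
    rewrite supp_reorient YD (indep_reor h0 NBN' YC) andbT /=.
    apply/subsetP => x; rewrite /reorient /= !inE.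
    case: (eqVneq x e) => [->//|xe] /=; rewrite andbF orbF => /(subsetP Y2).
    by rewrite in_setD1 => /andP[].
  + have NE : N' \subset Ek m e by apply: sub_Ek_noe.
    case: (boolP (pos (reor (e |: A') C) (Ek m e :\: N') N')) => P.
    * exists (N', A').
        rewrite inNN //= NE AE NBN' /=; apply/negP => H.
        apply: (EL hW hD h0 NBN' NE eA' _ P H); by rewrite -EkS_D.
      by rewrite /psi /= (negbTE eA') acyc_flip // P.
    * exists (N', e |: A').
        rewrite inNN //= NE NBN' /=; apply/andP; split => //; apply/subsetP => x.
        rewrite in_setU1 => /orP[/eqP ->|/(subsetP AE)//]; by rewrite in_setC.
      by rewrite /psi /= setU11 /= setU1K.
Qed.


Definition Fj {m} (C : {set signed m}) j (p : signed m) :=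
  foldl (fun p e => psi C e p) p (take j (enum 'I_m)).

Lemma chain {m} (C : {set signed m}) :
  welim C -> disj C -> (set0, set0) \notin C -> (forall X, X \in C -> negs X \in C) ->
  forall j, j <= m ->
  [/\ (forall p, p \in NN C 0 -> Fj C j p \in NN C j),
      {in NN C 0 &, injective (Fj C j)} &
      (forall q, q \in NN C j -> exists2 p, p \in NN C 0 & Fj C j p = q)].
Proof.
move=> hW hD h0 hN; elim=> [|j IH] hj.
  have F0 : forall p, Fj C 0 p = p by move=> p; rewrite /Fj take0.
  by split => [p|p q _ _|q qN]; rewrite ?F0 //; exists q; rewrite ?F0.
have hj' : j < m by [].
have [IH1 IH2 IH3] := IH (ltnW hj).
pose e := Ordinal hj'.
have FjS : forall p, Fj C j.+1 p = psi C e (Fj C j p).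
  move=> p; rewrite /Fj (take_nth e); last by rewrite size_enum_ord.
  rewrite foldl_rcons; congr psi; apply: val_inj; by rewrite /= nth_enum_ord.
have [S1 S2 S3] := psi_step e hW hD h0 hN.
split.
- by move=> p /IH1 /S1; rewrite FjS.
- move=> p q Hp Hq; rewrite !FjS => /(S2 _ _ (IH1 _ Hp) (IH1 _ Hq)); exact: IH2.
- move=> q /S3 [p' /IH3 [p Hp <-] <-]; exists p => //; by rewrite FjS.
Qed.

Lemma psi_allE {m} (C : {set signed m}) A : psi_all C A = Fj C m (set0, A).
Proof. by rewrite /psi_all /Fj take_oversize // size_enum_ord. Qed.

Lemma Ek0 {m} : Ek m 0 = set0.
Proof. by apply/setP => x; rewrite !inE. Qed.

Lemma Ekm {m} : Ek m m = setT.
Proof. by apply/setP => x; rewrite !inE ltn_ord. Qed.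

Lemma NN0 {m} (C : {set signed m}) A :
  welim C -> (set0, set0) \notin C -> loopless C ->
  ((set0, A) \in NN C 0) = (A \in AM C).
Proof.
move=> hW h0 hl; rewrite inNN //= Ek0 sub0set setC0 subsetT /= inE.
have NB0 : NBC C set0.
  apply/negP => /exists_inP [X XC /exists_inP [g gX /andP[_ sub]]].
  move: sub; rewrite subset0 => /eqP E.
  have : supp X = [set g] by rewrite -(setD1K gX) E setU0.
  by move=> E'; move: (hl X XC); rewrite E' cards1.
rewrite NB0 /=; apply/idP/idP.
- move=> np; apply/forall_inP => X XC; apply/negP => /eqP X2.
  move/negP: np; apply; apply/exists_inP; exists X => //.
  rewrite setD0 setC0 subsetT X2 sub0set /=.
  exact: (indep_reor h0 NB0 XC).
- move=> /forall_inP H; apply/negP => /exists_inP [Y YC /and3P[_ Y2 _]].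
  by move: (H Y YC); rewrite subset0 in Y2; rewrite Y2.
Qed.

Lemma NNm {m} (C : {set signed m}) q :
  welim C -> (set0, set0) \notin C -> q \in NN C m -> q.2 = set0 /\ NBC C q.1.
Proof.
move=> hW h0; rewrite inNN // Ekm setCT subset0 => /and4P[_ /eqP -> -> _] //.
Qed.

Lemma NNm' {m} (C : {set signed m}) N :
  welim C -> (set0, set0) \notin C -> NBC C N -> (N, set0) \in NN C m.
Proof.
move=> hW h0 NBN; rewrite inNN //= Ekm subsetT sub0set NBN /=.
apply/negP => /exists_inP [Y YC /and3P[YD _ YN]]; move/negP: YN; apply.
by move: YD; rewrite setTD setCK.
Qed.

Theorem mainTheorem1 (m : nat) (C : {set signed m})
  (hOM : is_OM [set: 'I_m] C) (hloop : loopless C) :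
  (forall e : 'I_m,
     [/\ (forall p, p \in NN C e -> psi C e p \in NN C e.+1),
         {in NN C e &, injective (psi C e)} &
         (forall q, q \in NN C e.+1 -> exists2 p, p \in NN C e & psi C e p = q)])
  /\
  [/\ (forall A, A \in AM C -> (psi_all C A).2 = set0),
      {in AM C &, injective (fun A => (psi_all C A).1)} &
      [set (psi_all C A).1 | A in AM C] = NBCset C].
Proof.
case: hOM => h1 h2 h3 h4 h5.
have hW : welim C := h5.
have hD : disj C := fun X XC => (h1 X XC).1.
split; first by move=> e; exact: psi_step.
have [C1 C2 C3] := chain hW hD h2 h3 (leqnn m).
have inm : forall A, A \in AM C -> psi_all C A \in NN C m.
  by move=> A HA; rewrite psi_allE; apply: C1; rewrite NN0.
split.
- by move=> A HA; case: (NNm hW h2 (inm A HA)).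
- move=> A A' HA HA' /= E.
  have E' : psi_all C A = psi_all C A'.
    case: (NNm hW h2 (inm A HA)) => E1 _; case: (NNm hW h2 (inm A' HA')) => E2 _.
    by rewrite [psi_all C A]surjective_pairing [psi_all C A']surjective_pairing E E1 E2.
  move: E'; rewrite !psi_allE => /C2; rewrite !NN0 // => /(_ HA HA') [].
  by [].
- apply/setP => N; rewrite inE; apply/imsetP/idP.
  + by case=> A HA ->; case: (NNm hW h2 (inm A HA)).
  + move=> NBN; case: (C3 _ (NNm' hW h2 NBN)) => [[p1 p2]] Hp E.
    have p10 : p1 = set0.
      by move: Hp; rewrite inNN //= Ek0 subset0 => /and4P[/eqP -> _ _ _].
    move: Hp E; rewrite p10 NN0 // => Hp E; exists p2 => //.
    by rewrite psi_allE E.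
Qed.
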